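(* In the two-bidder, two-configuration asymmetric setting below, assume $0<p<1$, $r_1>0$, and additionally $r'_1\ge r'_2$ (uniform winner), $r_2\ge r'_2$ (congruent loser) and $r_2\le\mu_1$ (weak competition). Then every calibrated information structure has revenue at most $$\frac{p\,r_1r_2+(1-p)\,r'_1r'_2}{\mu_1},$$ and, when $r_2<\mu_1$, this bound is attained by the calibrated information structure that fully bundles the winner and unbundles the loser, i.e. which sends $s=(\mu_1,r_2)$ when the CTR vector is $(r_1,r_2)$ and $s=(\mu_1,r'_2)$ when it is $(r'_1,r'_2)$.
   Context: Setting. Two bidders with values $v_1=v_2=1$. The CTR vector equals $(r_1,r_2)$ with probability $p$ and $(r'_1,r'_2)$ with probability $1-p$, all entries in $[0,1]$, labeled so that $r_1\ge r'_1$, $r_1\ge r_2$, $r_1\ge r'_2$. Let $\mu_1=pr_1+(1-p)r'_1$. An information structure is a finitely supported probability distribution on pairs $(r,s)\in[0,1]^2\times[0,1]^2$ whose $r$-marginal is this prior. Given signals $s$, the winner $i^*$ maximizes $s_i$ (uniform tie-breaking), pays per click $s_j/s_{i^*}$ with $j\ne i^*$ (revenue $0$ if $s_{i^*}=0$), only upon a click, which occurs with probability $r_{i^*}$; revenue is $\mathbb{E}[r_{i^*}p_{i^*}]$. Calibrated: $\mathbb{E}[r_i\mid s_i=t]=t$ for every $i$ and every $t$ with $\Pr[s_i=t]>0$. *)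

(* Defs.v *)
From HB Require Import structures.
From mathcomp Require Import all_boot all_order all_algebra.
From mathcomp Require Import reals.
Set Implicit Arguments. Unset Strict Implicit. Unset Printing Implicit Defensive.
Import Order.TTheory GRing.Theory Num.Theory.
Local Open Scope ring_scope.

(* A finitely supported probability distribution on pairs (r, s) in
   [0,1]^2 x [0,1]^2 is represented by a finite list of atoms
   (weight, r, s); the distribution is the sum of the weighted point masses
   (repeated atoms are allowed and simply add up). *)
Definition atom (R : realType) := (R * ((R * R) * (R * R)))%type.

Section Auction.
Variable R : realType.
Implicit Types (I : seq (atom R)) (a : atom R).

Definition weight a : R := a.1.
Definition ctr a : R * R := a.2.1.
Definition sig a : R * R := a.2.2.

(* coordinate i of a pair; bidder 1 = true, bidder 2 = false *)
Definition coord (i : bool) (x : R * R) : R := if i then x.1 else x.2.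

Definition in01 (x : R) := (0 <= x) && (x <= 1).

Definition prior (p : R) (r r' : R * R) (x : R * R) : R :=
  (if x == r then p else 0) + (if x == r' then 1 - p else 0).

Definition prob I (P : pred (atom R)) : R := \sum_(a <- I | P a) weight a.

Definition info_structure (p : R) (r r' : R * R) I : Prop :=
  [/\ forall a, a \in I -> 0 <= weight a,
      forall a, a \in I -> [/\ in01 (ctr a).1, in01 (ctr a).2,
                               in01 (sig a).1 & in01 (sig a).2]
    & forall x : R * R, prob I (fun a => ctr a == x) = prior p r r' x].

Definition calibrated I : Prop :=
  forall (i : bool) (t : R),
    0 < prob I (fun a => coord i (sig a) == t) ->
    (\sum_(a <- I | coord i (sig a) == t) weight a * coord i (ctr a))
      / prob I (fun a => coord i (sig a) == t) = t.

(* Expected revenue given CTR vector r and signals s (second-price per click,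
   winner maximizes s_i, uniform tie-breaking, revenue 0 if s_winner = 0). *)
Definition atom_revenue (r s : R * R) : R :=
  let: (r1, r2) := r in let: (s1, s2) := s in
  if s2 < s1 then r1 * (s2 / s1)
  else if s1 < s2 then r2 * (s1 / s2)
  else if s1 == 0 then 0
  else (r1 * (s2 / s1) + r2 * (s1 / s2)) / 2.

Definition revenue I : R :=
  \sum_(a <- I) weight a * atom_revenue (ctr a) (sig a).

End Auction.

(* Main.v *)
Require Import Defs.
From mathcomp Require Import all_boot all_order all_algebra.
From mathcomp Require Import reals.
From mathcomp Require Import ring lra.
Import Order.TTheory GRing.Theory Num.Theory.
Local Open Scope ring_scope.

Notation coordD := Defs.coord.
Section Help.
Variable R : realType.
Implicit Types (I : seq (atom R)).

Lemma group_zero (key : atom R -> R) (F : atom R -> R) (phi : R -> R) I :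
  (forall t, \sum_(a <- I | key a == t) F a = 0) ->
  \sum_(a <- I) phi (key a) * F a = 0.
Proof.
move: {2}(size I) (leqnn (size I)) => n; elim: n I => [|n IH] I.
  by case: I => // _ _; rewrite big_nil.
case: I => [|a0 l]; first by rewrite big_nil.
move=> /= Hs Hz.
rewrite (bigID (fun a => key a == key a0)) /=.
have -> : \sum_(i <- a0 :: l | key i == key a0) phi (key i) * F i
          = phi (key a0) * \sum_(i <- a0 :: l | key i == key a0) F i.
  rewrite big_distrr /=; apply: eq_bigr => i /eqP -> //.
rewrite Hz mulr0 add0r -big_filter; apply: IH.
  rewrite /= eqxx /= size_filter.
  exact: leq_trans (count_size _ _) Hs.
move=> t; rewrite big_filter_cond.
case: (eqVneq t (key a0)) => [->|ht].
  by rewrite big_pred0 // => i; case: eqP.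
transitivity (\sum_(a <- a0 :: l | key a == t) F a); last exact: Hz.
apply: eq_bigl => i.
by case: (eqVneq (key i) t) => [->|]; rewrite ?andbT ?andbF // ht.
Qed.


Lemma prob_ge0 I (P : pred (atom R)) :
  (forall b, b \in I -> 0 <= weight b) -> 0 <= prob I P.
Proof.
move=> Hw; rewrite /prob big_seq_cond; apply: sumr_ge0 => i /andP[Hi _]; exact: Hw.
Qed.

Lemma w_le_prob I (P : pred (atom R)) a :
  (forall b, b \in I -> 0 <= weight b) -> a \in I -> P a -> weight a <= prob I P.
Proof.
elim: I => [|b l IH] //= Hw.
have Hw' : forall c, c \in l -> 0 <= weight c.
  by move=> c Hc; apply: Hw; rewrite inE Hc orbT.
rewrite /prob inE big_cons => /orP [/eqP ->|Ha] Pa.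
  by rewrite Pa lerDl; have := @prob_ge0 l P Hw'; rewrite /prob.
have := IH Hw' Ha Pa; rewrite /prob.
case: (P b) => // H; apply: (le_trans H); rewrite lerDr; apply: Hw.
by rewrite inE eqxx.
Qed.


Lemma ctr_cases p r r' I a : info_structure p r r' I -> a \in I ->
  weight a = 0 \/ ctr a = r \/ ctr a = r'.
Proof.
case=> Hw _ Hp Ha.
have w0 := Hw a Ha.
case: (eqVneq (weight a) 0) => [->|wn0]; first by left.
right; have wpos : 0 < weight a by rewrite lt_def wn0 w0.
have := @w_le_prob I (fun b => ctr b == ctr a) a Hw Ha (eqxx _).
rewrite Hp /prior.
case: (eqVneq (ctr a) r) => [->|h1]; first by left.
case: (eqVneq (ctr a) r') => [->|h2]; first by right.
rewrite addr0 => H; exfalso; move: (lt_le_trans wpos H); by rewrite ltxx.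
Qed.

Lemma sum_ctr p r r' I (g : R * R -> R) : info_structure p r r' I ->
  \sum_(a <- I) weight a * g (ctr a) = p * g r + (1 - p) * g r'.
Proof.
move=> HI; case: (HI) => _ _ Hp.
have E : \sum_(a <- I) weight a * g (ctr a) =
   \sum_(a <- I | ctr a == r) weight a * g r +
   \sum_(a <- I | (ctr a != r) && (ctr a == r')) weight a * g r'.
  rewrite (bigID (fun a => ctr a == r)) /=; congr (_ + _).
    by apply: eq_bigr => a /eqP ->.
  rewrite [in RHS]big_mkcond [in LHS]big_mkcond big_seq [in RHS]big_seq.
  apply: eq_bigr => a Ha; case: (eqVneq (ctr a) r) => //= hr.
  case: (eqVneq (ctr a) r') => [->//|hr'].
  by case: (@ctr_cases p r r' I a HI Ha) => [->|[]]; rewrite ?mul0r //; move/eqP; rewrite ?(negbTE hr) ?(negbTE hr').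
rewrite E -!big_distrl /=.
have := Hp r; rewrite /prob /prior eqxx => ->.
case: (eqVneq r r') => [<-|hne].
  rewrite big_pred0; last by move=> a; case: eqP.
  by rewrite mul0r addr0 mulrDl.
rewrite addr0.
have := Hp r'; rewrite /prob /prior eqxx eq_sym (negbTE hne) add0r => <-.
congr (_ + _ * _); apply: eq_bigl => a.
by case: (eqVneq (ctr a) r') => [->|]; rewrite ?andbT ?andbF // eq_sym.
Qed.


Lemma calib_group p r r' I (i : bool) (t : R) : info_structure p r r' I -> calibrated I ->
  \sum_(a <- I | coordD i (sig a) == t) weight a * coordD i (ctr a)
   = t * prob I (fun a => coordD i (sig a) == t).
Proof.
move=> [Hw Hr _] Hc.
have P0 := @prob_ge0 I (fun a => coordD i (sig a) == t) Hw.
case: (ltrgtP 0 (prob I (fun a => coordD i (sig a) == t))) P0 => // [Ppos|P0e] _.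
  have HS := Hc i t Ppos.
  set S := \sum_(a <- I | _) _ in HS *; set P := prob _ _ in HS Ppos *.
  transitivity (S / P * P); first by rewrite divfK // gt_eqF.
  by rewrite HS.
rewrite -P0e mulr0; apply/eqP; rewrite eq_le; apply/andP; split.
  suff H : \sum_(a <- I | coordD i (sig a) == t) weight a * coordD i (ctr a)
     <= prob I (fun a => coordD i (sig a) == t) by move: H; rewrite -P0e.
  rewrite /prob big_seq_cond [X in _ <= X]big_seq_cond; apply: ler_sum => a /andP[Ha _].
  have := Hr a Ha; have := Hw a Ha; clear P0e; case: i => /= w0 [/andP[c0 c1] /andP[d0 d1] _ _].
    by rewrite ler_piMr.
  by rewrite ler_piMr.
rewrite big_seq_cond; apply: sumr_ge0 => a /andP[Ha _].
have := Hr a Ha; have := Hw a Ha; clear P0e; case: i => /= w0 [/andP[c0 c1] /andP[d0 d1] _ _].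
  exact: mulr_ge0.
exact: mulr_ge0.
Qed.


Lemma calib_zero p r r' I (i : bool) (t : R) : info_structure p r r' I -> calibrated I ->
  \sum_(a <- I | coordD i (sig a) == t)
     weight a * (coordD i (ctr a) - coordD i (sig a)) = 0.
Proof.
move=> HI Hc.
have -> : \sum_(a <- I | coordD i (sig a) == t)
     weight a * (coordD i (ctr a) - coordD i (sig a)) =
  \sum_(a <- I | coordD i (sig a) == t) weight a * coordD i (ctr a)
  - t * prob I (fun a => coordD i (sig a) == t).
  rewrite /prob big_distrr /= -sumrB; apply: eq_bigr => a /eqP ->.
  by rewrite mulrBr [t * _]mulrC.
by rewrite (@calib_group p r r' I i t HI Hc) subrr.
Qed.

Lemma sum_phi_zero p r r' I (i : bool) (phi : R -> R) :
  info_structure p r r' I -> calibrated I ->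
  \sum_(a <- I) phi (coordD i (sig a)) *
     (weight a * (coordD i (ctr a) - coordD i (sig a))) = 0.
Proof.
move=> HI Hc; apply: group_zero => t; exact: (@calib_zero p r r' I i t HI Hc).
Qed.

Lemma sig_range p r r' I (i : bool) (lo hi : R) a :
  info_structure p r r' I -> calibrated I ->
  (forall b, b \in I -> weight b != 0 -> lo <= coordD i (ctr b) <= hi) ->
  a \in I -> 0 < weight a -> lo <= coordD i (sig a) <= hi.
Proof.
move=> HI Hc Hb Ha wpos; case: (HI) => Hw _ _.
set t := coordD i (sig a).
have Ppos : 0 < prob I (fun b => coordD i (sig b) == t).
  exact: (lt_le_trans wpos (@w_le_prob I (fun b => coordD i (sig b) == t) a Hw Ha (eqxx _))).
have HS := @calib_group p r r' I i t HI Hc.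
set P := prob I _ in Ppos HS *.
have low : lo * P <= t * P.
  rewrite -HS /P /prob big_distrr /= big_seq_cond [X in _ <= X]big_seq_cond.
  apply: ler_sum => b /andP[Hbi _].
  case: (eqVneq (weight b) 0) => [->|wn0]; first by rewrite !mul0r mulr0.
  have := Hb b Hbi wn0 => /andP[l1 _]; rewrite mulrC; apply: ler_wpM2l => //; exact: Hw.
have high : t * P <= hi * P.
  rewrite -HS /P /prob big_distrr /= big_seq_cond [X in _ <= X]big_seq_cond.
  apply: ler_sum => b /andP[Hbi _].
  case: (eqVneq (weight b) 0) => [->|wn0]; first by rewrite !mul0r mulr0.
  have := Hb b Hbi wn0 => /andP[_ l1]; have := Hw b Hbi => w0; nra.
by rewrite -(ler_pM2r Ppos) low -(ler_pM2r Ppos) high.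
Qed.

End Help.
Section Alg.
Variable R : realType.

Lemma rev_posA (c1 c2 s1 s2 : R) : 0 < s1 -> 0 <= s2 -> 0 <= c2 -> c2 <= c1 ->
  (s2 - c2) * (c1 - s1) <= 0 ->
  atom_revenue (c1, c2) (s1, s2) + c2 - s2 <= c1 * c2 / s1.
Proof.
move=> s1p s20 c20 c21 H.
have s1n : s1 != 0 by rewrite gt_eqF.
have case1 : c1 * (s2 / s1) + c2 - s2 <= c1 * c2 / s1.
  rewrite -subr_ge0 (_ : c1 * c2 / s1 - (c1 * (s2 / s1) + c2 - s2)
      = - ((s2 - c2) * (c1 - s1)) / s1); last by field.
  by rewrite divr_ge0 ?oppr_ge0 // ltW.
rewrite /atom_revenue.
case: ltP => h21.
  exact: case1.
case: ltP => h12.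
  have s2p : 0 < s2 by apply: lt_trans s1p h12.
  have s2n : s2 != 0 by rewrite gt_eqF.
  have : c2 * (s1 / s2) <= c2.
    rewrite ler_piMr // ?divr_ge0 ?ltW //; first by rewrite ltr_pdivrMr // mul1r.
  have : c1 * c2 / s1 - (2 * c2 - s1) = ((s1 - c2)^+2 + c2 * (c1 - c2)) / s1 by field.
  have : 0 <= ((s1 - c2)^+2 + c2 * (c1 - c2)) / s1.
    apply: divr_ge0; last exact: ltW.
    by apply: addr_ge0; [exact: sqr_ge0 | apply: mulr_ge0; rewrite // subr_ge0].
  move=> h1 h2 h3; nra.
have e : s1 = s2 by apply/eqP; rewrite eq_le h21 h12.
rewrite (gt_eqF s1p) -e divff // mulr1.
apply: le_trans case1; rewrite -e divff // mulr1 lerD2r lerD2r.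
by rewrite ler_pdivrMr // mulr2n mulrDr !mulr1 lerD2l.
Qed.


Lemma rev_zero (c1 c2 s2 : R) : 0 <= s2 -> atom_revenue (c1, c2) (0, s2) = 0.
Proof.
move=> s20; rewrite /atom_revenue; case: ltP => h; first by rewrite invr0 !mulr0.
case: ltP => h'; first by rewrite mul0r mulr0.
by rewrite eqxx.
Qed.

Definition mu (p r1 r1' : R) := p * r1 + (1 - p) * r1'.
Definition EE (p r1 r2 r1' r2' : R) := p * r1 * r2 + (1 - p) * r1' * r2'.
Definition ff (p r1 r2 r1' r2' : R) := EE p r1 r2 r1' r2' / (mu p r1 r1') ^+ 2.
Definition psi (p r1 r2 r1' r2' c1 c2 : R) :=
  c1 * c2 / mu p r1 r1' - ff p r1 r2 r1' r2' * (c1 - mu p r1 r1').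
Definition phi1 (p r1 r2 r1' r2' s : R) :=
  ff p r1 r2 r1' r2' + (mu p r1 r1' - s) * (r1 * r2 - r1' * r2') / (s * mu p r1 r1' * (r1 - r1')).

Lemma stepB_id (p r1 r2 r1' r2' c1 c2 s1 : R) :
  0 < s1 -> 0 < mu p r1 r1' -> r1 - r1' != 0 ->
  (c1 = r1 /\ c2 = r2) \/ (c1 = r1' /\ c2 = r2') ->
  psi p r1 r2 r1' r2' c1 c2 + phi1 p r1 r2 r1' r2' s1 * (c1 - s1) - c1 * c2 / s1
  = (mu p r1 r1' - s1) ^+ 2 * r1' * r1 * (r2 - r2') / (s1 * (mu p r1 r1') ^+ 2 * (r1 - r1')).
Proof.
move=> s1p mup dn.
have s1n : s1 != 0 by rewrite gt_eqF.
have mun : mu p r1 r1' != 0 by rewrite gt_eqF.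
rewrite /psi /phi1 /ff /EE.
case=> [[-> ->]|[-> ->]]; move: mun; rewrite /mu => mun; field; rewrite mun s1n dn //.
Qed.


Lemma atom_bound (p r1 r2 r1' r2' c1 c2 s1 s2 : R) :
  0 <= p <= 1 -> 0 <= r1' -> 0 <= r2' -> r1' <= r1 -> r2' <= r2 -> r2 <= r1 ->
  r2' <= r1' -> 0 < mu p r1 r1' ->
  (c1 = r1 /\ c2 = r2) \/ (c1 = r1' /\ c2 = r2') ->
  r1' <= s1 <= r1 -> r2' <= s2 <= r2 ->
  atom_revenue (c1, c2) (s1, s2) <=
  psi p r1 r2 r1' r2' c1 c2 + phi1 p r1 r2 r1' r2' s1 * (c1 - s1) - (c2 - s2).
Proof.
move=> /andP[p0 p1] r1'0 r2'0 r11 r22 r21 r21' mup Hc /andP[s1l s1h] /andP[s2l s2h].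
have mule : mu p r1 r1' <= r1 by rewrite /mu; nra.
have mun : mu p r1 r1' != 0 by rewrite gt_eqF.
have f0 : 0 <= ff p r1 r2 r1' r2'.
  rewrite /ff /EE; apply: divr_ge0; last exact: sqr_ge0.
  apply: addr_ge0; apply: mulr_ge0; try apply: mulr_ge0; lra.
have s10 : 0 <= s1 by lra.
have s20 : 0 <= s2 by lra.
case: (eqVneq s1 0) => [e0|s1n].
  rewrite e0 rev_zero // /phi1 !mul0r invr0 mulr0 addr0 subr0.
  rewrite /psi.
  set m := mu p r1 r1'; set f := ff p r1 r2 r1' r2'.
  have -> : c1 * c2 / m - f * (c1 - m) + f * c1 - (c2 - s2) = c1 * c2 / m + f * m - c2 + s2.
    by ring.
  have fm : 0 <= f * m by apply: mulr_ge0 => //; exact: ltW.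
  case: Hc => [[-> ->]|[-> ->]].
    have : r2 <= r1 * r2 / m.
      rewrite ler_pdivlMr // mulrC; apply: ler_wpM2r => //; lra.
    lra.
  have : 0 <= r1' * r2' / m by apply: divr_ge0; [apply: mulr_ge0|exact: ltW].
  lra.
have s1p : 0 < s1 by rewrite lt_def s1n.
have c20 : 0 <= c2 by case: Hc => [[_ ->]|[_ ->]]; lra.
have c21 : c2 <= c1 by case: Hc => [[-> ->]|[-> ->]].
have hs : (s2 - c2) * (c1 - s1) <= 0.
  case: Hc => [[-> ->]|[-> ->]]; nra.
have A := @rev_posA c1 c2 s1 s2 s1p s20 c20 c21 hs.
suff B : c1 * c2 / s1 <= psi p r1 r2 r1' r2' c1 c2 + phi1 p r1 r2 r1' r2' s1 * (c1 - s1).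
  lra.
case: (eqVneq (r1 - r1') 0) => [d0|dn].
  have e1 : r1' = r1 by apply/eqP; rewrite eq_sym -subr_eq0; apply/eqP.
  have em : mu p r1 r1' = r1 by rewrite /mu e1; ring.
  have es : s1 = r1 by lra.
  have ec : c1 = r1 by case: Hc => [[-> _]|[-> _]].
  rewrite /psi em es ec !subrr !mulr0 subr0 addr0 //.
rewrite -subr_ge0 stepB_id //.
have dp : 0 < r1 - r1' by rewrite lt_def dn subr_ge0.
apply: divr_ge0.
  apply: mulr_ge0; last lra.
  apply: mulr_ge0; last lra.
  apply: mulr_ge0; [exact: sqr_ge0|lra].
apply: mulr_ge0; last exact: ltW.
apply: mulr_ge0; [exact: ltW|exact: sqr_ge0].
Qed.

End Alg.

Arguments mu {R}.
Arguments EE {R}.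
Arguments ff {R}.
Arguments psi {R}.
Arguments phi1 {R}.

Theorem mainTheorem9 (R : realType) (p r1 r2 r1' r2' : R) :
  0 < p < 1 ->
  in01 r1 -> in01 r2 -> in01 r1' -> in01 r2' ->
  r1' <= r1 -> r2 <= r1 -> r2' <= r1 ->
  0 < r1 ->
  r2' <= r1' ->
  r2' <= r2 ->
  r2 <= p * r1 + (1 - p) * r1' ->
  (forall I : seq (atom R),
      info_structure p (r1, r2) (r1', r2') I -> calibrated I ->
      revenue I <= (p * r1 * r2 + (1 - p) * r1' * r2') / (p * r1 + (1 - p) * r1'))
  /\
  (r2 < p * r1 + (1 - p) * r1' ->
   let mu1 := p * r1 + (1 - p) * r1' in
   let I0 : seq (atom R) :=
     [:: (p, ((r1, r2), (mu1, r2))); (1 - p, ((r1', r2'), (mu1, r2')))] in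
   [/\ info_structure p (r1, r2) (r1', r2') I0, calibrated I0
     & revenue I0 = (p * r1 * r2 + (1 - p) * r1' * r2') / mu1]).
Proof.
move=> /andP[p0 p1] /andP[r10 r1le] /andP[r20 r2le] /andP[r1'0 r1'le] /andP[r2'0 r2'le].
move=> r11 r21 r2'1 r1p r21' r22 r2mu.
have mup : 0 < mu p r1 r1' by rewrite /mu; nra.
have mun : mu p r1 r1' != 0 by rewrite gt_eqF.
split.
  move=> I HI Hc; case: (HI) => Hw _ _.
  have Hcb : forall b, b \in I -> weight b != 0 ->
      ctr b = (r1, r2) \/ ctr b = (r1', r2').
    move=> b Hb wn; case: (@ctr_cases R p (r1, r2) (r1', r2') I b HI Hb) => //.
    by move=> e; rewrite e eqxx in wn.
  have R1 : forall a, a \in I -> 0 < weight a -> r1' <= (sig a).1 <= r1.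
    move=> a Ha wp.
    apply: (@sig_range R p (r1, r2) (r1', r2') I true r1' r1 a HI Hc _ Ha wp).
    move=> b Hb wn; case: (Hcb b Hb wn) => -> /=; lra.
  have R2 : forall a, a \in I -> 0 < weight a -> r2' <= (sig a).2 <= r2.
    move=> a Ha wp.
    apply: (@sig_range R p (r1, r2) (r1', r2') I false r2' r2 a HI Hc _ Ha wp).
    move=> b Hb wn; case: (Hcb b Hb wn) => -> /=; lra.
  pose g (c : R * R) := psi p r1 r2 r1' r2' c.1 c.2.
  apply: (@le_trans _ _ (\sum_(a <- I) (weight a * g (ctr a)
      + phi1 p r1 r2 r1' r2' (coordD true (sig a)) *
          (weight a * (coordD true (ctr a) - coordD true (sig a)))
      - (fun _ => 1) (coordD false (sig a)) *
          (weight a * (coordD false (ctr a) - coordD false (sig a)))))).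
    rewrite /revenue big_seq [X in _ <= X]big_seq; apply: ler_sum => a Ha.
    have w0 := Hw a Ha.
    case: (eqVneq (weight a) 0) => [->|wn]; first by rewrite !mul0r !mulr0 addr0 subr0.
    have wp : 0 < weight a by rewrite lt_def wn w0.
    have := R1 a Ha wp; have := R2 a Ha wp; have := Hcb a Ha wn; move: wp.
    move: a {Ha w0 wn} => [w [[c1 c2] [s1 s2]]] /= wp Hc12 Hs2 Hs1.
    have H := @atom_bound R p r1 r2 r1' r2' c1 c2 s1 s2.
    rewrite /g /=.
    have -> : w * psi p r1 r2 r1' r2' c1 c2 + phi1 p r1 r2 r1' r2' s1 * (w * (c1 - s1))
       - 1 * (w * (c2 - s2)) = w * (psi p r1 r2 r1' r2' c1 c2
         + phi1 p r1 r2 r1' r2' s1 * (c1 - s1) - (c2 - s2)) by ring.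
    apply: ler_wpM2l; first exact: ltW.
    apply: H => //; try lra.
    by case: Hc12 => [[-> ->]|[-> ->]]; [left|right].
  rewrite sumrB big_split /= (@sum_ctr R p (r1, r2) (r1', r2') I g HI).
  rewrite (@sum_phi_zero R p (r1, r2) (r1', r2') I true _ HI Hc).
  rewrite (@sum_phi_zero R p (r1, r2) (r1', r2') I false (fun _ => 1) HI Hc).
  rewrite addr0 subr0 /g /psi /ff /EE /=.
  rewrite le_eqVlt; apply/orP; left; apply/eqP; move: mun; rewrite /mu => mun; field; exact: mun.
move=> ltmu mu1 I0.
have mueq : mu1 = mu p r1 r1' by [].
have mu10 : 0 <= mu1 by rewrite mueq ltW.
have mu11 : mu1 <= 1 by rewrite mueq /mu; nra.
have r2'mu : r2' < mu1 by rewrite /mu1; lra.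
split.
- split.
  + move=> a; rewrite !inE => /orP[/eqP->|/eqP->] /=; [exact: ltW | rewrite /weight /=; lra].
  + move=> a; rewrite !inE => /orP[/eqP->|/eqP->] /=; rewrite /in01;
      split; apply/andP; split => //.
  + move=> x; rewrite /prob /prior !big_cons big_nil /ctr /weight /=.
    rewrite [(r1, r2) == x]eq_sym [(r1', r2') == x]eq_sym.
    by case: (x == (r1, r2)); case: (x == (r1', r2')); rewrite /= ?addr0 ?add0r.
- have pn : p != 0 by rewrite gt_eqF.
  have qn : 1 - p != 0 by rewrite gt_eqF // subr_gt0.
  have e1 : p + (1 - p) = 1 by ring.
  move=> [] t; rewrite /prob !big_cons !big_nil /sig /ctr /weight /=.
    case: (eqVneq mu1 t) => [<-|h]; rewrite ?eqxx /= ?addr0 ?e1; last by rewrite ltxx.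
    by move=> _; rewrite divr1.
  case: (eqVneq r2 t) => [e|h]; case: (eqVneq r2' t) => [e'|h'] /=; rewrite ?addr0 => Hp.
  + by rewrite e1 divr1 e e'; ring.
  + by rewrite mulrC mulKf // e.
  + by rewrite mulrC mulKf // e'.
  + by rewrite ltxx in Hp.
- have h1 : r2 < mu1 := ltmu.
  have mu1n : mu1 != 0 by rewrite mueq.
  rewrite /revenue !big_cons !big_nil /weight /ctr /sig /atom_revenue /= h1 r2'mu addr0.
  by field.
Qed.
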